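(* Let $\hat{a}\in\mathbb{C}$, $\hat{a}\neq 0$, and $\hat{d}\in\mathbb{Z}$, $\hat{d}\geq 0$. Let $F_0,F_1$ be causal filters with $\gcd(F_0,F_1)=z^{-d_F}$ where $0\leq d_F\leq \hat{d}$, and let $M\in\mathbb{Z}$ satisfy $0\leq M\leq \hat{d}-d_F$. (i) If $F_0\neq 0$, there exists a unique causal complement $(R_0,R_1)$ to $(F_0,F_1)$ for inhomogeneity $\hat{a}z^{-\hat{d}}$ that is degree-reducing modulo $M$ in $F_0$, i.e. with $z^{-M}\mid R_0$, $z^{-M}\mid R_1$ and $\deg(R_0)<\deg(F_0)-\deg\gcd(F_0,F_1)+M$. (ii) If $F_1\neq 0$, there exists a unique causal complement $(R'_0,R'_1)$ to $(F_0,F_1)$ for inhomogeneity $\hat{a}z^{-\hat{d}}$ that is degree-reducing modulo $M$ in $F_1$, i.e. with $z^{-M}\mid R'_0$, $z^{-M}\mid R'_1$ and $\deg(R'_1)<\deg(F_1)-\deg\gcd(F_0,F_1)+M$. (iii) If $F_0,F_1\neq 0$ and $(R_0,R_1)$, $(R'_0,R'_1)$ are the complements of (i) and (ii), then $(R_0,R_1)=(R'_0,R'_1)$ if and only if $\hat{d}<\deg(F_0)+\deg(F_1)-\deg\gcd(F_0,F_1)+M$.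
   Context: A causal filter is a polynomial in $z^{-1}$ with complex coefficients; $\deg$ denotes degree as a polynomial in $z^{-1}$ (with $\deg 0=-\infty$). Divisibility and gcd are taken in $\mathbb{C}[z^{-1}]$ (gcd determined up to nonzero constant; ''$\gcd(F_0,F_1)=z^{-d_F}$'' means the gcd is $z^{-d_F}$ up to a nonzero constant). Given causal $F_0,F_1$, an ordered pair $(R_0,R_1)$ of causal filters is a causal complement to $(F_0,F_1)$ for inhomogeneity $\hat{a}z^{-\hat{d}}$ if $F_0(z)R_1(z)-F_1(z)R_0(z)=\hat{a}z^{-\hat{d}}$. The pair $(R_0,R_1)$ has multiplicity $M$ if $z^{-M}$ divides both $R_0$ and $R_1$. For $\ell\in\{0,1\}$, a causal complement $(R_0,R_1)$ is degree-reducing modulo $M$ in $F_\ell$ if it has multiplicity $M$ and $\deg(R_\ell)<\deg(F_\ell)-\deg\gcd(F_0,F_1)+M$. *)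

(* Defs.v *)
From mathcomp Require Import all_boot all_order all_algebra.
From mathcomp Require Import complex.
From mathcomp Require Import reals.
Set Implicit Arguments. Unset Strict Implicit. Unset Printing Implicit Defensive.
Import Order.TTheory GRing.Theory Num.Theory.
Local Open Scope ring_scope.

(* Causal filters are polynomials in z^{-1}: the indeterminate 'X of
   {poly C} stands for z^{-1}.  Coefficients: C = R[i], R : realType
   (the complex numbers). *)

(* Degree as a polynomial in z^{-1}; convention deg 0 = -1 (stands for -oo). *)
Definition deg (K : nzRingType) (p : {poly K}) : int := (size p)%:Z - 1.

Section Filters.
Variable K : fieldType.

Definition causal_complement (F0 F1 : {poly K}) (a : K) (d : nat)
  (R : {poly K} * {poly K}) : Prop :=
  F0 * R.2 - F1 * R.1 = a *: 'X^d.

Definition has_multiplicity (M : nat) (R : {poly K} * {poly K}) : Prop :=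
  ('X^M %| R.1) /\ ('X^M %| R.2).

Definition sel (l : 'I_2) (P : {poly K} * {poly K}) : {poly K} :=
  if val l == 0%N then P.1 else P.2.

Definition degree_reducing_complement (l : 'I_2) (F0 F1 : {poly K})
  (a : K) (d M : nat) (R : {poly K} * {poly K}) : Prop :=
  [/\ causal_complement F0 F1 a d R, has_multiplicity M R &
      deg (sel l R) < deg (sel l (F0, F1)) - deg (gcdp F0 F1) + M%:Z].

End Filters.

(* Main.v *)
Require Import Defs.
From mathcomp Require Import all_boot all_order all_algebra.
From mathcomp Require Import complex.
From mathcomp Require Import reals.
From mathcomp Require Import zify ring.
Import Order.TTheory GRing.Theory Num.Theory.
Local Open Scope ring_scope.

Section Core.
Set Implicit Arguments. Unset Strict Implicit.
Variable K : fieldType.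

Lemma core_ex (p q c : {poly K}) : coprimep p q -> p != 0 ->
  exists xy : {poly K} * {poly K}, p * xy.2 - q * xy.1 = c /\ (size xy.1 < size p)%N.
Proof.
move=> /Bezout_eq1_coprimepP [[u v] /= huv] p0.
set k := (- (c * v)) %/ p.
exists ((- (c * v)) %% p, c * u - q * k) => /=; split; last by rewrite ltn_modp.
have e := divp_eq (- (c * v)) p.
have -> : (- (c * v)) %% p = - (c * v) - k * p by rewrite {2}e; rewrite /k; ring.
rewrite -[RHS]mulr1 -huv; ring.
Qed.

Lemma core_uniq (p q c : {poly K}) (x y x' y' : {poly K}) :
  coprimep p q -> p != 0 ->
  p * y - q * x = c -> (size x < size p)%N ->
  p * y' - q * x' = c -> (size x' < size p)%N -> x = x' /\ y = y'.
Proof.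
move=> cpq p0 e1 s1 e2 s2.
have h : p * (y - y') = q * (x - x').
  apply/eqP; rewrite -subr_eq0; apply/eqP.
  have E : (p * y - q * x) - (p * y' - q * x') = 0 by rewrite e1 e2 subrr.
  rewrite -E; ring.
have dv : p %| (x - x').
  by rewrite -(Gauss_dvdpr _ cpq) -h dvdp_mulr.
have xx : x - x' = 0.
  apply/eqP; apply: contraT => nz.
  have := dvdp_leq nz dv.
  have := size_add x (- x'); rewrite size_opp => H1 H2.
  have := leq_trans H2 H1; rewrite leq_max => /orP [h3|h3]; [move: (leq_ltn_trans h3 s1) | move: (leq_ltn_trans h3 s2)]; by rewrite ltnn.
have ex : x = x' by apply/eqP; rewrite -subr_eq0 xx.
split => //.
move: h; rewrite xx mulr0 => /eqP; rewrite mulf_eq0 (negbTE p0) /= subr_eq0.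
by move/eqP.
Qed.

End Core.

Lemma core_deg (K : fieldType) (p q x y : {poly K}) (a : K) (e : nat) :
  p != 0 -> q != 0 -> a != 0 -> p * y - q * x = a *: 'X^e ->
  (size x < size p)%N -> (size y < size q)%N = (e.+3 <= size p + size q)%N.
Proof.
move=> p0 q0 a0 E sx.
have sc : size (a *: 'X^e : {poly K}) = e.+1 by rewrite size_scale // size_polyXn.
have sp : (0 < size p)%N by rewrite size_poly_gt0.
have sq : (0 < size q)%N by rewrite size_poly_gt0.
have h3 : (size (q * x)%R <= (size q + size x).-1)%N by apply: size_mul_leq.
apply/idP/idP => [sy|h].
- have h1 : (e.+1 <= maxn (size (p * y)%R) (size (q * x)%R))%N.
    by rewrite -sc -E -(size_opp (q * x)); apply: size_add.
  have h2 : (size (p * y)%R <= (size p + size y).-1)%N by apply: size_mul_leq.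
  lia.
- have [->|y0] := eqVneq y 0; first by rewrite size_poly0.
  have E' : p * y = a *: 'X^e + q * x by rewrite -E; ring.
  have h1 : ((size p + size y).-1 <= maxn e.+1 (size (q * x)%R))%N.
    by rewrite -size_mul // E' -sc; apply: size_add.
  lia.
Qed.
Section Red1.
Variable K : fieldType.

Lemma deg_mulXn (r : {poly K}) (n : nat) :
  deg (r * 'X^n) = if r == 0 then (-1)%R else ((n + size r)%N%:Z - 1)%R.
Proof.
rewrite /deg; have [->|r0] := eqVneq r 0; first by rewrite mul0r size_poly0.
by rewrite size_mulXn.
Qed.

Lemma deg_cond (f r : {poly K}) (dF M : nat) : f != 0 ->
  (deg (r * 'X^M) < deg (f * 'X^dF) - dF%:Z + M%:Z)%R <-> (size r < size f)%N.
Proof.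
move=> f0; rewrite !deg_mulXn (negbTE f0).
have sf : (0 < size f)%N by rewrite size_poly_gt0.
have [->|r0] := eqVneq r 0.
  rewrite size_poly0 sf; split => // _.
  rewrite !PoszD. lia.
rewrite !PoszD. split => H; lia.
Qed.

End Red1.
Section Red.
Variable K : fieldType.

Lemma reduce (l : 'I_2) (f0 f1 : {poly K}) (a : K) (dF M e : nat) (Q : {poly K} * {poly K}) :
  sel l (f0, f1) != 0 -> deg (gcdp (f0 * 'X^dF) (f1 * 'X^dF)) = dF%:Z ->
  degree_reducing_complement l (f0 * 'X^dF) (f1 * 'X^dF) a (dF + M + e) M Q <->
  exists r : {poly K} * {poly K}, [/\ Q = (r.1 * 'X^M, r.2 * 'X^M),
     f0 * r.2 - f1 * r.1 = a *: 'X^e & (size (sel l r) < size (sel l (f0, f1)))%N].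
Proof.
move=> s0 dg.
have key : forall r : {poly K} * {poly K},
  f0 * 'X^dF * (r.2 * 'X^M) - f1 * 'X^dF * (r.1 * 'X^M) = a *: 'X^(dF + M + e) <->
  f0 * r.2 - f1 * r.1 = a *: 'X^e.
  move=> r.
  have -> : a *: 'X^(dF + M + e) = (a *: 'X^e) * 'X^(dF + M) :> {poly K}
    by rewrite -scalerAl -exprD addnC.
  have -> : f0 * 'X^dF * (r.2 * 'X^M) - f1 * 'X^dF * (r.1 * 'X^M) =
     (f0 * r.2 - f1 * r.1) * 'X^(dF + M) by rewrite exprD; ring.
  split; last by move->.
  apply: mulIf; rewrite monic_neq0 // monicXn //.
have selM : forall (r : {poly K} * {poly K}) n,
    sel l (r.1 * 'X^n, r.2 * 'X^n) = sel l r * 'X^n by move=> r n; rewrite /sel; case: ifP.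
split.
- case=> EQ [/dvdpP [q1 h1] /dvdpP [q2 h2]] D.
  exists (q1, q2); split => //.
  + by case: Q h1 h2 {EQ D} => /= ? ? -> ->.
  + by apply/key; rewrite -h1 -h2.
  + move: D; rewrite (_ : Q = ((q1, q2).1 * 'X^M, (q1, q2).2 * 'X^M)); last first.
      by case: Q h1 h2 {EQ} => /= ? ? -> ->.
    rewrite selM -[(f0 * 'X^dF, f1 * 'X^dF)]/((f0, f1).1 * 'X^dF, (f0, f1).2 * 'X^dF).
    by rewrite selM dg => /deg_cond; apply.
- case=> [[r1 r2] [-> E S]]; split.
  + by apply/key.
  + by split; apply: dvdp_mull; apply: dvdpp.
  + rewrite -[(r1 * _, _)]/((r1, r2).1 * 'X^M, (r1, r2).2 * 'X^M) selM.
    rewrite -[(f0 * 'X^dF, f1 * 'X^dF)]/((f0, f1).1 * 'X^dF, (f0, f1).2 * 'X^dF).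
    by rewrite selM dg; apply/deg_cond.
Qed.

End Red.
Section M.
Variable K : fieldType.

Lemma uniq1 (f0 f1 c : {poly K}) (r r' : {poly K} * {poly K}) :
  coprimep f0 f1 -> f1 != 0 ->
  f0 * r.2 - f1 * r.1 = c -> (size r.2 < size f1)%N ->
  f0 * r'.2 - f1 * r'.1 = c -> (size r'.2 < size f1)%N -> r = r'.
Proof.
move=> cop f1n E S E' S'.
have cop' : coprimep f1 f0 by rewrite coprimep_sym.
have E1 : f1 * (- r.1) - f0 * (- r.2) = c by rewrite -E; ring.
have E2 : f1 * (- r'.1) - f0 * (- r'.2) = c by rewrite -E'; ring.
rewrite -size_opp in S; rewrite -size_opp in S'.
have [h1 h2] := core_uniq cop' f1n E1 S E2 S'.
case: r r' {E E' S S' E1 E2} h1 h2 => [x y] [x' y'] /= h1 h2.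
by rewrite -(opprK x) h2 opprK -(opprK y) h1 opprK.
Qed.

Lemma mainK (a : K) (f0 f1 : {poly K}) (dF M e : nat) :
 a != 0 -> coprimep f0 f1 -> deg (gcdp (f0 * 'X^dF) (f1 * 'X^dF)) = dF%:Z ->
 [/\ f0 * 'X^dF != 0 -> exists! Q : {poly K} * {poly K},
          degree_reducing_complement (0 : 'I_2) (f0 * 'X^dF) (f1 * 'X^dF) a (dF + M + e) M Q,
      f1 * 'X^dF != 0 -> exists! Q' : {poly K} * {poly K},
          degree_reducing_complement (1 : 'I_2) (f0 * 'X^dF) (f1 * 'X^dF) a (dF + M + e) M Q' &
      f0 * 'X^dF != 0 -> f1 * 'X^dF != 0 ->
      forall Q Q' : {poly K} * {poly K},
        degree_reducing_complement (0 : 'I_2) (f0 * 'X^dF) (f1 * 'X^dF) a (dF + M + e) M Q ->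
        degree_reducing_complement (1 : 'I_2) (f0 * 'X^dF) (f1 * 'X^dF) a (dF + M + e) M Q' ->
        (Q = Q' <-> (dF + M + e)%N%:Z < deg (f0 * 'X^dF) + deg (f1 * 'X^dF)
              - deg (gcdp (f0 * 'X^dF) (f1 * 'X^dF)) + M%:Z)].
Proof.
move=> a0 cop dg.
have nz : forall f : {poly K}, f * 'X^dF != 0 -> f != 0.
  by move=> f; apply: contraNneq => ->; rewrite mul0r.
have s0 : forall r : {poly K} * {poly K}, sel (0 : 'I_2) r = r.1 by [].
have s1 : forall r : {poly K} * {poly K}, sel (1 : 'I_2) r = r.2 by [].
set c := a *: 'X^e.
split.
- move=> /nz f0n.
  have [[x y] [E S]] := core_ex c cop f0n; rewrite /= in E S.
  exists (x * 'X^M, y * 'X^M); split.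
    by apply/(@reduce _ (0 : 'I_2) _ _ _ _ _ _ _ f0n dg); exists (x, y).
  move=> Q' /(@reduce _ (0 : 'I_2) _ _ _ _ _ _ _ f0n dg).
  move=> [[r1 r2]] [-> E' S']; rewrite s0 /= in S'.
  by have [-> ->] := core_uniq cop f0n E S E' S'.
- move=> /nz f1n.
  have cop' : coprimep f1 f0 by rewrite coprimep_sym.
  have [[x y] [E S]] := core_ex c cop' f1n; rewrite /= in E S.
  have E1 : f0 * (- x) - f1 * (- y) = c by rewrite -E /=; ring.
  exists ((- y) * 'X^M, (- x) * 'X^M); split.
    apply/(@reduce _ (1 : 'I_2) _ _ _ _ _ _ _ f1n dg).
    by exists (- y, - x); rewrite s1 /= size_opp.
  move=> Q' /(@reduce _ (1 : 'I_2) _ _ _ _ _ _ _ f1n dg).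
  move=> [r'] [-> E' S']; rewrite s1 in S'.
  have <- // : (- y, - x) = r'.
  by apply: (uniq1 (r := (- y, - x)) (r' := r') cop f1n E1) => //=; rewrite size_opp.
- move=> /nz f0n /nz f1n Q Q'.
  move=> /(@reduce _ (0 : 'I_2) _ _ _ _ _ _ _ f0n dg).
  move=> [r] [-> E S]; rewrite s0 in S.
  move=> /(@reduce _ (1 : 'I_2) _ _ _ _ _ _ _ f1n dg).
  move=> [r'] [-> E' S']; rewrite s1 in S'.
  have cd := core_deg f0n f1n a0 E S.
  have sf0 : (0 < size f0)%N by rewrite size_poly_gt0.
  have sf1 : (0 < size f1)%N by rewrite size_poly_gt0.
  have H : ((dF + M + e)%N%:Z < deg (f0 * 'X^dF) + deg (f1 * 'X^dF)
              - deg (gcdp (f0 * 'X^dF) (f1 * 'X^dF)) + M%:Z) = (e.+3 <= size f0 + size f1)%N.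
    rewrite dg !deg_mulXn (negbTE f0n) (negbTE f1n) !PoszD.
    apply/idP/idP => h; lia.
  rewrite H -cd; split.
  + case=> _ h2; have -> : r.2 = r'.2.
      by apply: (mulIf (monic_neq0 (monicXn _ M))).
    exact: S'.
  + move=> h; have -> // : r = r'.
    exact: (uniq1 (r := r) (r' := r') cop f1n E).
Qed.

End M.

Theorem corollary2p5 (R : realType) (a : R[i]) (d : nat)
  (F0 F1 : {poly R[i]}) (dF M : nat) :
  a != 0 ->
  gcdp F0 F1 %= 'X^dF ->
  (dF <= d)%N ->
  (M <= d - dF)%N ->
  [/\ F0 != 0 -> exists! Q : {poly R[i]} * {poly R[i]},
          degree_reducing_complement (0 : 'I_2) F0 F1 a d M Q,
      F1 != 0 -> exists! Q' : {poly R[i]} * {poly R[i]},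
          degree_reducing_complement (1 : 'I_2) F0 F1 a d M Q' &
      F0 != 0 -> F1 != 0 ->
      forall Q Q' : {poly R[i]} * {poly R[i]},
        degree_reducing_complement (0 : 'I_2) F0 F1 a d M Q ->
        degree_reducing_complement (1 : 'I_2) F0 F1 a d M Q' ->
        (Q = Q' <-> d%:Z < deg F0 + deg F1 - deg (gcdp F0 F1) + M%:Z)].
Proof.
move=> a0 hg hdF hM.
have dvd0 : 'X^dF %| F0 by rewrite -(eqp_dvdl _ hg) dvdp_gcdl.
have dvd1 : 'X^dF %| F1 by rewrite -(eqp_dvdl _ hg) dvdp_gcdr.
move/dvdpP: dvd0 => [f0 hF0]; move/dvdpP: dvd1 => [f1 hF1].
subst F0 F1.
have cop : coprimep f0 f1.
  have h : gcdp f0 f1 * 'X^dF %= 'X^dF.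
    by apply: eqp_trans hg; rewrite eqp_sym gcdp_mul2r.
  rewrite -gcdp_eqp1 -size_poly_eq1.
  have := eqp_size h; rewrite size_polyXn.
  have [g0|gn] := eqVneq (gcdp f0 f1) 0; first by rewrite g0 mul0r size_poly0.
  by rewrite size_mulXn // -[dF.+1]addn1 => /eqP; rewrite eqn_add2l.
have dg : deg (gcdp (f0 * 'X^dF) (f1 * 'X^dF)) = dF%:Z.
  by rewrite /deg (eqp_size hg) size_polyXn -addn1 PoszD addrK.
have hd : d = (dF + M + (d - dF - M))%N.
  by rewrite -addnA subnKC // subnKC.
rewrite hd.
exact: (@mainK _ a f0 f1 dF M (d - dF - M) a0 cop dg).
Qed.
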